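(* Let $\mathit{VI}$ be a finite set of variables with $\#\mathit{VI}=n$. For each $sh_1,sh_2\in\mathit{SH}$, each $\sigma\in\mathit{Subst}$ and each $k\in\mathbb{N}$ with $1\le k\le n$: if $\rho_{\mathit{TSD}_k}(sh_1)=\rho_{\mathit{TSD}_k}(sh_2)$ then $\rho_{\mathit{TSD}_k}(\mathrm{amgu}(sh_1,\sigma))=\rho_{\mathit{TSD}_k}(\mathrm{amgu}(sh_2,\sigma))$.
   Context: $\mathit{SG}=\wp(\mathit{VI})\setminus\{\emptyset\}$, $\mathit{SH}=\wp(\mathit{SG})$. $\rho_{\mathit{TSD}_k}(sh)=\{\,S\in\mathit{SG}\mid \forall T\subseteq S:\ \#T<k\implies S=\bigcup\{U\in sh\mid T\subseteq U\subseteq S\}\,\}$. $\mathit{Subst}$: idempotent substitutions (finite sets of bindings $x\mapsto t$ with $t\ne x$ a first-order term), with variables in $\mathit{VI}$; $\mathrm{vars}(t)$ is the set of variables of $t$. $\mathrm{bin}(sh_1,sh_2)=\{S_1\cup S_2\mid S_i\in sh_i\}$; $sh^\star=\{S\in\mathit{SG}\mid\exists sh'\subseteq sh: S=\bigcup sh'\}$; $\mathrm{rel}(V,sh)=\{S\in sh\mid S\cap V\ne\emptyset\}$; with $v_x=\{x\}$, $v_t=\mathrm{vars}(t)$, $v_{xt}=v_x\cup v_t$: $\mathrm{amgu}(sh,x\mapsto t)=(sh\setminus\mathrm{rel}(v_{xt},sh))\cup\mathrm{bin}(\mathrm{rel}(v_x,sh)^\star,\mathrm{rel}(v_t,sh)^\star)$;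 $\mathrm{amgu}(sh,\emptyset)=sh$, $\mathrm{amgu}(sh,\{x\mapsto t\}\cup\sigma)=\mathrm{amgu}(\mathrm{amgu}(sh,x\mapsto t),\sigma\setminus\{x\mapsto t\})$. *)

(* Defs.v *)
From Stdlib Require List.
From mathcomp Require Import all_boot.
Set Implicit Arguments. Unset Strict Implicit. Unset Printing Implicit Defensive.

Section Defs.
Variable VI : finType.

Inductive term : Type := Var of VI | Fn of nat & seq term.

Fixpoint vars (t : term) : {set VI} :=
  match t with
  | Var x => [set x]
  | Fn _ ts => (fix vs (l : seq term) : {set VI} :=
                  match l with [::] => set0 | u :: l' => vars u :|: vs l' end) ts
  end.

(* A substitution is given as a finite list of bindings x |-> t (an
   enumeration of the finite set of bindings). *)
Definition binding := (VI * term)%type.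

Definition dom (s : seq binding) : {set VI} := [set x in map fst s].

Definition idem_subst (s : seq binding) : Prop :=
  uniq (map fst s) /\
  (forall x t, List.In (x, t) s -> t <> Var x) /\
  (forall x t, List.In (x, t) s -> [disjoint vars t & dom s]).

Definition is_SH (sh : {set {set VI}}) : Prop := set0 \notin sh.

Definition rhoTSD (k : nat) (sh : {set {set VI}}) : {set {set VI}} :=
  [set S : {set VI} | (S != set0) &&
     [forall T : {set VI}, ((T \subset S) && (#|T| < k)) ==>
        (S == \bigcup_(U in sh | (T \subset U) && (U \subset S)) U)]].

Definition bin (sh1 sh2 : {set {set VI}}) : {set {set VI}} :=
  [set S1 :|: S2 | S1 in sh1, S2 in sh2].

Definition star (sh : {set {set VI}}) : {set {set VI}} :=
  [set S : {set VI} | (S != set0) &&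
     [exists sh' : {set {set VI}}, (sh' \subset sh) && (S == \bigcup_(U in sh') U)]].

Definition rel (V : {set VI}) (sh : {set {set VI}}) : {set {set VI}} :=
  [set S in sh | S :&: V != set0].

Definition amgu1 (sh : {set {set VI}}) (x : VI) (t : term) : {set {set VI}} :=
  (sh :\: rel ([set x] :|: vars t) sh) :|:
  bin (star (rel [set x] sh)) (star (rel (vars t) sh)).

(* amgu(sh, {x|->t} ∪ σ) = amgu(amgu(sh, x|->t), σ \ {x|->t}), processing
   the bindings in the order of the enumeration. *)
Definition amgu (sh : {set {set VI}}) (s : seq binding) : {set {set VI}} :=
  foldl (fun sh' b => amgu1 sh' b.1 b.2) sh s.

End Defs.

(* Main.v *)
Require Import Defs.
From mathcomp Require Import all_boot.

Set Implicit Arguments. Unset Strict Implicit. Unset Printing Implicit Defensive.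

Section Proof.
Variable VI : finType.
Variable k : nat.

Definition le_sh (sh sh' : {set {set VI}}) := forall U W : {set VI}, U \in sh -> W \subset U ->
  W != set0 -> #|W| <= k -> exists2 U', U' \in sh' & (W \subset U') && (U' \subset U).

Lemma rhoP (sh : {set {set VI}}) (S : {set VI}) : reflect (S != set0 /\ forall W : {set VI}, W \subset S -> W != set0 -> #|W| <= k ->
   exists2 U, U \in sh & (W \subset U) && (U \subset S)) (S \in rhoTSD k sh).
Proof.
rewrite inE; apply: (iffP andP) => [[nz /forallP H]|[nz H]]; split=> //.
- move=> W sWS nzW szW. case/set0Pn: nzW => w wW.
  have := H (W :\ w). rewrite (subset_trans (subsetDl _ _) sWS) /=.
  have -> : #|W :\ w| < k by rewrite (cardsD1 w W) wW add1n in szW.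
  move=> /= /eqP SE. have wS : w \in S := subsetP sWS w wW.
  rewrite SE in wS. case/bigcupP: wS => U /andP[Ush /andP[sWU sUS]] wU.
  exists U => //. rewrite sUS andbT. apply/subsetP => y yW.
  case: (eqVneq y w) => [->//|ne]. apply: (subsetP sWU). by rewrite in_setD1 ne yW.
- apply/forallP => T; apply/implyP => /andP[sTS szT].
  rewrite eqEsubset; apply/andP; split; last first.
    by apply/bigcupsP => U /andP[_ /andP[_ ->]].
  apply/subsetP => s sS.
  have h1 : s |: T \subset S by rewrite subUset sub1set sS sTS.
  have h2 : s |: T != set0 by apply/set0Pn; exists s; rewrite setU11.
  have h3 : #|s |: T| <= k by rewrite cardsU1; apply: leq_trans szT; case: (s \in T).
  have [U Ush /andP[sU1 sU2]] := H (s |: T) h1 h2 h3.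
  apply/bigcupP; exists U.
    by rewrite Ush sU2 andbT; apply: subset_trans sU1; exact: subsetUr.
  by apply: (subsetP sU1); rewrite setU11.
Qed.

Lemma le_rho (sh1 sh2 : {set {set VI}}) : le_sh sh1 sh2 -> rhoTSD k sh1 \subset rhoTSD k sh2.
Proof.
move=> le; apply/subsetP => S /rhoP[nz H]; apply/rhoP; split=> // W sWS nzW szW.
have [U Ush /andP[sWU sUS]] := H W sWS nzW szW.
have [U' U'sh /andP[s1 s2]] := le U W Ush sWU nzW szW.
exists U' => //; by rewrite s1 (subset_trans s2 sUS).
Qed.

Lemma sh_le_rho (sh : {set {set VI}}) : le_sh sh (rhoTSD k sh).
Proof.
move=> U W Ush sWU nzW szW; exists U; last by rewrite sWU subxx.
apply/rhoP; split.
  case/set0Pn: nzW => w wW; apply/set0Pn; exists w; exact: subsetP sWU w wW.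
move=> W' sW' _ _; exists U => //; by rewrite sW' subxx.
Qed.

Lemma rho_le (sh : {set {set VI}}) : le_sh (rhoTSD k sh) sh.
Proof. by move=> U W /rhoP[_ H]; apply: H. Qed.

Lemma le_sh_trans (sh1 sh2 sh3 : {set {set VI}}) : le_sh sh1 sh2 -> le_sh sh2 sh3 -> le_sh sh1 sh3.
Proof.
move=> l1 l2 U W Ush sWU nzW szW.
have [U' U'sh /andP[s1 s2]] := l1 U W Ush sWU nzW szW.
have [U'' U''sh /andP[s3 s4]] := l2 U' W U'sh s1 nzW szW.
exists U'' => //; by rewrite s3 (subset_trans s4 s2).
Qed.

Lemma star_cover (V : {set VI}) (sh : {set {set VI}}) (S : {set VI}) : S \in star (Defs.rel V sh) -> S != set0 /\
  forall w, w \in S -> exists2 c, c \in sh & [&& w \in c, c \subset S & c :&: V != set0].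
Proof.
rewrite inE => /andP[nz /existsP[A /andP[sA /eqP SE]]]. split => // w.
rewrite SE => /bigcupP[c cA wc]. have := subsetP sA c cA; rewrite inE => /andP[csh cV].
exists c => //. by rewrite wc cV (bigcup_sup c cA).
Qed.

Lemma ex_piece (V : {set VI}) (sh sh' : {set {set VI}}) (S U : {set VI}) : 0 < k -> le_sh sh sh' -> S \in star (Defs.rel V sh) -> S \subset U ->
  exists2 c, c \in sh' & (c \subset U) && (c :&: V != set0).
Proof.
move=> kpos le Ss sSU. have [nz cov] := star_cover Ss.
case/set0Pn: nz => w wS. have [c csh /and3P[wc cS cV]] := cov w wS.
case/set0Pn: cV => v; rewrite inE => /andP[vc vV].
have h1 : [set v] \subset c by rewrite sub1set.
have h2 : [set v] != set0 by apply/set0Pn; exists v; rewrite set11.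
have h3 : #|[set v]| <= k by rewrite cards1.
have [c' c'sh /andP[s1 s2]] := le c [set v] csh h1 h2 h3.
exists c' => //. rewrite (subset_trans s2 (subset_trans cS sSU)) /=.
apply/set0Pn; exists v; rewrite inE vV andbT; by rewrite sub1set in s1.
Qed.

Lemma amgu1_le (sh sh' : {set {set VI}}) (x : VI) (t : term VI) : 0 < k -> le_sh sh sh' -> le_sh (amgu1 sh x t) (amgu1 sh' x t).
Proof.
move=> kpos le U W; rewrite /amgu1 in_setU => /orP[|].
  rewrite in_setD => /andP[Urel Ush] sWU nzW szW.
  have [U' U'sh /andP[sWU' sU'U]] := le U W Ush sWU nzW szW.
  exists U'; last by rewrite sWU'.
  rewrite in_setU in_setD U'sh andbT; apply/orP; left.
  rewrite inE Ush /= negbK -subset0 in Urel.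
  rewrite inE U'sh /= negbK -subset0; exact: subset_trans (setSI _ sU'U) Urel.
case/imset2P => S1 S2 S1s S2s UE; subst U => sWU nzW szW.
have [nz1 cov1] := star_cover S1s; have [nz2 cov2] := star_cover S2s.
set V := [set x] :|: vars t.
set U := S1 :|: S2.
set G := fun Vi => [set c in Defs.rel Vi sh' | c \subset U].
set S1' := \bigcup_(c in G [set x]) c.
set S2' := \bigcup_(c in G (vars t)) c.
have in1 : forall c, c \in sh' -> c \subset U -> c :&: [set x] != set0 -> c \subset S1'.
  by move=> c csh cU cx; apply: bigcup_sup; rewrite !inE csh cU cx.
have in2 : forall c, c \in sh' -> c \subset U -> c :&: vars t != set0 -> c \subset S2'.
  by move=> c csh cU cx; apply: bigcup_sup; rewrite !inE csh cU cx.
have nzI : forall (c Vi : {set VI}), c :&: Vi != set0 -> c != set0.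
  move=> c Vi /set0Pn[v]; rewrite inE => /andP[vc _]; apply/set0Pn; by exists v.
have U'in : S1' :|: S2' \in amgu1 sh' x t.
  rewrite in_setU; apply/orP; right; apply/imset2P; exists S1' S2' => //.
  - rewrite inE; apply/andP; split.
      have [c csh /andP[cU cx]] := ex_piece kpos le S1s (subsetUl S1 S2).
      have := in1 c csh cU cx. have := nzI _ _ cx.
      case/set0Pn => v vc /subsetP /(_ v vc) vS; apply/set0Pn; by exists v.
    apply/existsP; exists (G [set x]); rewrite eqxx andbT.
    by apply/subsetP => c; rewrite inE => /andP[-> _].
  - rewrite inE; apply/andP; split.
      have [c csh /andP[cU cx]] := ex_piece kpos le S2s (subsetUr S1 S2).
      have := in2 c csh cU cx. have := nzI _ _ cx.
      case/set0Pn => v vc /subsetP /(_ v vc) vS; apply/set0Pn; by exists v.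
    apply/existsP; exists (G (vars t)); rewrite eqxx andbT.
    by apply/subsetP => c; rewrite inE => /andP[-> _].
have U'U : S1' :|: S2' \subset U.
  by rewrite subUset; apply/andP; split; apply/bigcupsP => c; rewrite inE => /andP[_ ->].
have [ex|noc] := boolP [exists c, [&& c \in sh, c \subset U, c :&: V != set0 & W \subset c]].
  case/existsP: ex => c /and4P[csh cU cV sWc].
  have [c' c'sh /andP[s1 s2]] := le c W csh sWc nzW szW.
  have c'U : c' \subset U := subset_trans s2 cU.
  case: (boolP (c' :&: V == set0)) => e.
    exists c'; last by rewrite s1 c'U.
    by rewrite in_setU in_setD c'sh andbT inE c'sh /= e.
  exists (S1' :|: S2') => //; rewrite U'U andbT; apply: subset_trans s1 _.
  move: e; rewrite setIUr setU_eq0 negb_and => /orP[e|e].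
    apply: subset_trans (subsetUl _ _); exact: in1.
  apply: subset_trans (subsetUr _ _); exact: in2.
have noc' : forall c, c \in sh -> c \subset U -> c :&: V != set0 -> ~~ (W \subset c).
  move=> c csh cU cV; apply/negP => sWc; move/negP: noc; apply.
  by apply/existsP; exists c; rewrite csh cU cV sWc.
have step : forall Vi : {set VI}, Vi \subset V ->
   (forall c', c' \in sh' -> c' \subset U -> c' :&: Vi != set0 -> c' \subset S1' :|: S2') ->
   forall c w, c \in sh -> c \subset U -> w \in c -> w \in W -> c :&: Vi != set0 ->
   w \in S1' :|: S2'.
  move=> Vi sVi hin c w csh cU wc wW cVi.
  have cV : c :&: V != set0.
    apply: contra cVi; rewrite -!subset0 => h; exact: subset_trans (setIS _ sVi) h.
  have nW := noc' c csh cU cV.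
  case/set0Pn: cVi => v; rewrite inE => /andP[vc vVi].
  have pr : W :&: c \proper W by rewrite properE subsetIl /= subsetI subxx.
  have h1 : v |: (W :&: c) \subset c by rewrite subUset sub1set vc subsetIr.
  have h2 : v |: (W :&: c) != set0 by apply/set0Pn; exists v; rewrite setU11.
  have h3 : #|v |: (W :&: c)| <= k.
    rewrite cardsU1; apply: leq_trans szW; apply: leq_trans (proper_card pr).
    by case: (v \in W :&: c).
  have [c' c'sh /andP[s1 s2]] := le c (v |: (W :&: c)) csh h1 h2 h3.
  have c'U : c' \subset U := subset_trans s2 cU.
  have : c' \subset S1' :|: S2'.
    apply: hin => //; apply/set0Pn; exists v; rewrite inE vVi andbT.
    by apply: (subsetP s1); rewrite setU11.
  move/subsetP; apply; apply: (subsetP s1). by rewrite !inE wW wc orbT.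
exists (S1' :|: S2') => //; rewrite U'U andbT.
apply/subsetP => w wW. have := subsetP sWU w wW. rewrite in_setU => /orP[w1|w2].
  have [c csh /and3P[wc cS cx]] := cov1 w w1.
  apply: (step [set x]) wW cx => //.
  - exact: subsetUl.
  - by move=> c' c'sh c'U c'x; apply: subset_trans (subsetUl _ _); exact: in1.
  - exact: subset_trans cS (subsetUl _ _).
have [c csh /and3P[wc cS cx]] := cov2 w w2.
apply: (step (vars t)) wW cx => //.
- exact: subsetUr.
- by move=> c' c'sh c'U c'x; apply: subset_trans (subsetUr _ _); exact: in2.
- exact: subset_trans cS (subsetUr _ _).
Qed.

Lemma amgu_le (sh sh' : {set {set VI}}) (s : seq (binding VI)) : 0 < k -> le_sh sh sh' -> le_sh (amgu sh s) (amgu sh' s).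
Proof.
move=> kpos; elim: s sh sh' => //= b s IH sh sh' H; apply: IH; exact: amgu1_le.
Qed.

End Proof.

Theorem lemma3p20 (VI : finType) (n : nat) (HVI : #|VI| = n)
  (sh1 sh2 : {set {set VI}}) (H1 : is_SH sh1) (H2 : is_SH sh2)
  (sigma : seq (binding VI)) (Hsigma : idem_subst sigma)
  (k : nat) (Hk : 1 <= k <= n) :
  rhoTSD k sh1 = rhoTSD k sh2 ->
  rhoTSD k (amgu sh1 sigma) = rhoTSD k (amgu sh2 sigma).
Proof.
move=> E. have kpos : 0 < k by case/andP: Hk.
have r2 : le_sh k (rhoTSD k sh1) sh2 by rewrite E; exact: (@rho_le _ k sh2).
have r1 : le_sh k (rhoTSD k sh2) sh1 by rewrite -E; exact: (@rho_le _ k sh1).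
have l12 := @le_sh_trans _ k _ _ _ (@sh_le_rho _ k sh1) r2.
have l21 := @le_sh_trans _ k _ _ _ (@sh_le_rho _ k sh2) r1.
apply/eqP; rewrite eqEsubset; apply/andP; split.
  exact: (@le_rho _ k _ _ (@amgu_le _ k _ _ sigma kpos l12)).
exact: (@le_rho _ k _ _ (@amgu_le _ k _ _ sigma kpos l21)).
Qed.
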